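(* Let $G$ be a symmetric two-player game with action space $\mathcal{A}=\mathbb{R}$ and payoff function $u$ satisfying Assumptions (A1) and (A2) below, and let $\epsilon_R>0$. On the strategy space $\mathcal{S}=\mathcal{B}\cup\mathcal{R}$ with the penalized fitness $f(\sigma,\sigma')=u\big(r(\sigma,\sigma'),r(\sigma',\sigma)\big)-\epsilon_R\,\mathbb{I}[\sigma\in\mathcal{R}]$, the strategy $B(\mathrm{NE}(0,0))$ is the unique Nash equilibrium, and it is an evolutionarily stable strategy.
   Context: Base game: a symmetric two-player game $G$ with action set $\mathcal{A}=\mathbb{R}$; $u(x,y)$ denotes the payoff of a player who plays $x$ when the opponent plays $y$. Subjective utilities: for $\alpha\in\mathbb{R}$, $V^{\alpha}(x,y)=u(x,y)+\alpha\,u(y,x)$. For $\alpha_i,\alpha_j\in\mathbb{R}$, $G(\alpha_i,\alpha_j)$ is the game with the same actions in which player $i$ has payoff $V^{\alpha_i}$ and player $j$ has payoff $V^{\alpha_j}$. $\mathrm{NE}(\alpha_i,\alpha_j)$ denotes the action of the player with parameter $\alpha_i$ in the Nash equilibrium of $G(\alpha_i,\alpha_j)$ (the opponent plays $\mathrm{NE}(\alpha_j,\alpha_i)$). $\mathrm{BR}(b;\alpha)$ is the maximizer of $a\mapsto V^{\alpha}(a,b)$. Assumptions: (A1) for all $\alpha_i,\alpha_j$, $G(\alpha_i,\alpha_j)$ has a unique (pure) Nash equilibrium; (A2) for all $b,\alpha$, $a\mapsto V^{\alpha}(a,b)$ has a unique global maximum $\mathrm{BR}(b;\alpha)$. Strategies: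 $\mathcal{B}=\{B(a):a\in\mathcal{A}\}$ and $\mathcal{R}=\{R(\alpha):\alpha\in\mathbb{R}\}$, with actions $r(B(a),\sigma')=a$ for all $\sigma'$; $r(R(\alpha),B(b))=\mathrm{BR}(b;\alpha)$; $r(R(\alpha),R(\alpha'))=\mathrm{NE}(\alpha,\alpha')$. $\mathbb{I}[\cdot]$ is the indicator function. Stability notions relative to a strategy space $\Sigma$ and fitness $f$: $\sigma$ is a Nash equilibrium if $f(\sigma,\sigma)\ge f(\sigma',\sigma)$ for all $\sigma'\in\Sigma$; a neutrally stable strategy if it is a Nash equilibrium and for every $\sigma'$ with $f(\sigma',\sigma)=f(\sigma,\sigma)$ one has $f(\sigma,\sigma')\ge f(\sigma',\sigma')$; an evolutionarily stable strategy if moreover this inequality is strict for every such $\sigma'\neq\sigma$. *)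

(* Defs.v *)
From Stdlib Require Import Reals ClassicalEpsilon.
Open Scope R_scope.

Definition V (u : R -> R -> R) (alpha x y : R) : R := u x y + alpha * u y x.

Definition isNEpair (u : R -> R -> R) (ai aj x y : R) : Prop :=
  (forall x', V u ai x' y <= V u ai x y) /\
  (forall y', V u aj y' x <= V u aj y x).

Definition Assumption_A1 (u : R -> R -> R) : Prop :=
  forall ai aj : R, exists! p : R * R, isNEpair u ai aj (fst p) (snd p).

Definition Assumption_A2 (u : R -> R -> R) : Prop :=
  forall b alpha : R, exists! a : R, forall a', V u alpha a' b <= V u alpha a b.

(* The Nash equilibrium pair of G(ai,aj) (meaningful under Assumption_A1). *)
Definition NEpair (u : R -> R -> R) (ai aj : R) : R * R :=
  epsilon (inhabits (0, 0)) (fun p : R * R => isNEpair u ai aj (fst p) (snd p)).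

Definition NE (u : R -> R -> R) (ai aj : R) : R := fst (NEpair u ai aj).

(* BR(b; alpha): the maximizer of a |-> V^alpha(a,b) (meaningful under Assumption_A2). *)
Definition BR (u : R -> R -> R) (b alpha : R) : R :=
  epsilon (inhabits 0) (fun a : R => forall a', V u alpha a' b <= V u alpha a b).

Inductive strat : Type :=
| Bs : R -> strat
| Rs : R -> strat.

Definition is_R (s : strat) : bool := match s with Rs _ => true | Bs _ => false end.

Definition r (u : R -> R -> R) (s s' : strat) : R :=
  match s, s' with
  | Bs a, _ => a
  | Rs al, Bs b => BR u b al
  | Rs al, Rs al' => NE u al al'
  end.

Definition fit (u : R -> R -> R) (epsR : R) (s s' : strat) : R :=
  u (r u s s') (r u s' s) - epsR * (if is_R s then 1 else 0).

Definition isNash (f : strat -> strat -> R) (s : strat) : Prop :=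
  forall s', f s' s <= f s s.

Definition isNSS (f : strat -> strat -> R) (s : strat) : Prop :=
  isNash f s /\ forall s', f s' s = f s s -> f s' s' <= f s s'.

Definition isESS (f : strat -> strat -> R) (s : strat) : Prop :=
  isNash f s /\ forall s', s' <> s -> f s' s = f s s -> f s' s' < f s s'.

(* Main.v *)
Require Import Defs.
From Stdlib Require Import Reals Lra ClassicalEpsilon Classical.
Open Scope R_scope.

Lemma NE_spec u ai aj : Assumption_A1 u ->
  isNEpair u ai aj (fst (NEpair u ai aj)) (snd (NEpair u ai aj)).
Proof.
  intros A1. unfold NEpair.
  apply (epsilon_spec (inhabits (0,0)) (fun p : R * R => isNEpair u ai aj (fst p) (snd p))).
  destruct (A1 ai aj) as [p [Hp _]]. exists p; exact Hp.
Qed.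

Lemma NE_sym_uniq u al x y : Assumption_A1 u -> isNEpair u al al x y -> x = y.
Proof.
  intros A1 H.
  destruct (A1 al al) as [p [Hp Hu]].
  assert (E1 := Hu (x,y) H).
  assert (H' : isNEpair u al al y x) by (destruct H; split; assumption).
  assert (E2 := Hu (y,x) H').
  assert (E : (x,y) = (y,x)) by congruence. inversion E. reflexivity.
Qed.

Lemma NE_uniq u al x y : Assumption_A1 u -> isNEpair u al al x y ->
  fst (NEpair u al al) = x.
Proof.
  intros A1 H.
  destruct (A1 al al) as [p [Hp Hu]].
  assert (E1 := Hu (x,y) H).
  assert (E2 := Hu _ (NE_spec u al al A1)).
  rewrite <- E2, E1. reflexivity.
Qed.

Lemma NE_diag u al : Assumption_A1 u ->
  isNEpair u al al (NE u al al) (NE u al al).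
Proof.
  intros A1. pose proof (NE_spec u al al A1) as H.
  pose proof (NE_sym_uniq _ _ _ _ A1 H) as E.
  unfold NE. rewrite <- E in H. exact H.
Qed.

Lemma BR_spec u b al : Assumption_A2 u -> forall a', V u al a' b <= V u al (BR u b al) b.
Proof.
  intros A2. unfold BR.
  apply (epsilon_spec (inhabits 0) (fun a : R => forall a', V u al a' b <= V u al a b)).
  destruct (A2 b al) as [a [Ha _]]. exists a; exact Ha.
Qed.

Lemma BR_uniq u b al a : Assumption_A2 u ->
  (forall a', V u al a' b <= V u al a b) -> BR u b al = a.
Proof.
  intros A2 H. destruct (A2 b al) as [c [Hc Hu]].
  rewrite <- (Hu a H). symmetry. apply Hu. apply BR_spec; assumption.
Qed.

Lemma V0 u x y : V u 0 x y = u x y.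
Proof. unfold V; ring. Qed.

Theorem proposition2 (u : R -> R -> R) (epsR : R) :
  Assumption_A1 u -> Assumption_A2 u -> 0 < epsR ->
  (forall s : strat, isNash (fit u epsR) s <-> s = Bs (NE u 0 0)) /\
  isESS (fit u epsR) (Bs (NE u 0 0)).
Proof.
  intros A1 A2 He.
  set (xs := NE u 0 0).
  assert (Hxs : isNEpair u 0 0 xs xs) by apply NE_diag, A1.
  assert (Hbr : forall a, u a xs <= u xs xs).
  { intro a. destruct Hxs as [H _]. specialize (H a). rewrite !V0 in H. exact H. }
  assert (Hbrs : forall a, a <> xs -> u a xs < u xs xs).
  { intros a Ha. destruct (Rlt_or_le (u a xs) (u xs xs)) as [h|h]; [exact h|].
    exfalso. apply Ha.
    assert (E1 : BR u xs 0 = a).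
    { apply BR_uniq; [exact A2|]. intro a'. rewrite !V0. specialize (Hbr a'). lra. }
    assert (E2 : BR u xs 0 = xs).
    { apply BR_uniq; [exact A2|]. intro a'. rewrite !V0. apply Hbr. }
    congruence. }
  assert (Hdev : forall al, u (BR u xs al) xs - epsR < u xs xs).
  { intro al. specialize (Hbr (BR u xs al)). lra. }
  assert (Nash : isNash (fit u epsR) (Bs xs)).
  { intros [a|al]; unfold fit; simpl.
    - specialize (Hbr a). lra.
    - specialize (Hdev al). lra. }
  split.
  - intros s; split.
    + intros Hn. destruct s as [a|al].
      * destruct (classic (a = xs)) as [E|Hne]; [now subst|].
        exfalso.
        assert (Hex : exists b, u a a < u b a).
        { apply NNPP; intro Hno.
          assert (Hle : forall b, u b a <= u a a).
          { intro b. apply Rnot_lt_le. intro hl. apply Hno. exists b; exact hl. }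
          assert (HN : isNEpair u 0 0 a a) by (split; intro; rewrite !V0; apply Hle).
          apply Hne. unfold xs, NE. symmetry. eapply NE_uniq; eauto. }
        destruct Hex as [b Hb]. specialize (Hn (Bs b)). unfold fit in Hn; simpl in Hn. lra.
      * exfalso. set (y := NE u al al).
        assert (Hy : isNEpair u al al y y) by apply NE_diag, A1.
        assert (EB : BR u y al = y).
        { apply BR_uniq; [exact A2|]. destruct Hy as [H _]. exact H. }
        specialize (Hn (Bs y)). unfold fit in Hn; simpl in Hn. fold y in Hn.
        rewrite EB in Hn. lra.
    + intros ->. exact Nash.
  - split; [exact Nash|].
    intros [a|al] Hne Heq; exfalso; unfold fit in Heq; simpl in Heq.
    + assert (a <> xs) by (intro; subst; apply Hne; reflexivity).
      specialize (Hbrs a H). lra.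
    + specialize (Hdev al). lra.
Qed.
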